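(* Let $a_2,a_3$ be integers with $1<a_2<a_3$, $A=\{1,a_2,a_3\}$, and let $h$ be a positive integer with $X(h)\ge a_3$. Write $X(h)=(k+1)a_3+Y$ with integers $k$ and $0\le Y<a_3$. Then $Y<a_3-1$, $k\ge 0$, and there is an integer $p$ with $0\le p\le k$ such that $SG(A,h-k,p)$ is a stride generator; moreover $y=Y+1$ is a break of $SG(A,h-k,p)$ which is either canonical or has break order $>k+1$.
   Context: An integer $x$ has an $h$-representation if $x=c_3a_3+c_2a_2+c_1$ with integers $c_1,c_2,c_3\ge0$ and $c_1+c_2+c_3\le h$. $X(h)$ is one less than the smallest positive integer with no $h$-representation. For integers $n$ and $i\ge 0$, an integer $x$ has an $n$-generation of order $i$ if there are integers $c_1,c_2\ge 0$ with $x+ia_3=c_2a_2+c_1$ and $c_1+c_2\le n+i$. For integers $n$ and $p\ge0$, $SG(A,n,p)$ is a stride generator if: (A) every integer $0\le x<a_3$ has an $n$-generation of some order $\le p$; (B) at least one integer $0\le x<a_3$ has no $n$-generation of order $<p$; (C) at least one integer $0\le y<a_3$ has no $(n-1)$-generation of any order $\le p+1$. Any $0\le y<a_3$ satisfying (C) is called a break. A break $y$ is canonical if there is no integer $j\ge 0$ with $y+ja_3=c_2a_2+c_1$, $c_1,c_2\ge 0$, $c_1+c_2\le (n-1)+j$; otherwise its break order is the smallest such $j$. *)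

(* Defs.v *)
From Stdlib Require Import ZArith Lia.
Open Scope Z_scope.

Definition hrep (a2 a3 h x : Z) : Prop :=
  exists c1 c2 c3 : Z, 0 <= c1 /\ 0 <= c2 /\ 0 <= c3 /\
    x = c3 * a3 + c2 * a2 + c1 /\ c1 + c2 + c3 <= h.

Definition is_X (a2 a3 h X : Z) : Prop :=
  0 <= X /\ (forall m, 1 <= m <= X -> hrep a2 a3 h m) /\ ~ hrep a2 a3 h (X + 1).

Definition ngen (a2 a3 n i x : Z) : Prop :=
  exists c1 c2 : Z, 0 <= c1 /\ 0 <= c2 /\
    x + i * a3 = c2 * a2 + c1 /\ c1 + c2 <= n + i.

Definition is_break (a2 a3 n p y : Z) : Prop :=
  0 <= y < a3 /\ forall i, 0 <= i <= p + 1 -> ~ ngen a2 a3 (n - 1) i y.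

Definition stride_generator (a2 a3 n p : Z) : Prop :=
  0 <= p /\
  (forall x, 0 <= x < a3 -> exists i, 0 <= i <= p /\ ngen a2 a3 n i x) /\
  (exists x, 0 <= x < a3 /\ forall i, 0 <= i < p -> ~ ngen a2 a3 n i x) /\
  (exists y, is_break a2 a3 n p y).

Definition canonical_break (a2 a3 n y : Z) : Prop :=
  ~ exists j, 0 <= j /\ ngen a2 a3 (n - 1) j y.

Definition is_break_order (a2 a3 n y j : Z) : Prop :=
  0 <= j /\ ngen a2 a3 (n - 1) j y /\
  forall j', 0 <= j' < j -> ~ ngen a2 a3 (n - 1) j' y.

(* Main.v *)
Require Import Defs.
From Stdlib Require Import ZArith Lia Classical.
Open Scope Z_scope.

Lemma min_exists (P : Z -> Prop) : forall n : nat, forall q, 0 <= q <= Z.of_nat n -> P q ->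
  exists p, 0 <= p <= q /\ P p /\ forall r, 0 <= r < p -> ~ P r.
Proof.
  induction n as [|n IH]; intros q Hq HP.
  - exists q. split; [lia|]. split; [auto|]. intros r Hr. lia.
  - destruct (classic (exists r, 0 <= r < q /\ P r)) as [[r [Hr Pr]]|Hno].
    + destruct (IH r ltac:(lia) Pr) as [p [Hp [Pp Hm]]].
      exists p. split; [lia|auto].
    + exists q. split; [lia|]. split; [auto|]. intros r Hr Pr. apply Hno; eauto.
Qed.

Lemma min_exists' (P : Z -> Prop) q : 0 <= q -> P q ->
  exists p, 0 <= p <= q /\ P p /\ forall r, 0 <= r < p -> ~ P r.
Proof. intros. apply (min_exists P (Z.to_nat q)); auto; lia. Qed.

Theorem lemma11 (a2 a3 h X k Y : Z) :
  1 < a2 -> a2 < a3 -> 1 <= h ->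
  is_X a2 a3 h X -> X >= a3 ->
  X = (k + 1) * a3 + Y -> 0 <= Y < a3 ->
  Y < a3 - 1 /\ 0 <= k /\
  exists p, 0 <= p <= k /\
    stride_generator a2 a3 (h - k) p /\
    is_break a2 a3 (h - k) p (Y + 1) /\
    (canonical_break a2 a3 (h - k) (Y + 1) \/
     exists j, is_break_order a2 a3 (h - k) (Y + 1) j /\ j > k + 1).
Proof.
  intros H2 H23 Hh [HX0 [Hall Hnot]] HXa HXk HY.
  assert (Hk : 0 <= k) by nia.
  assert (HYlt : Y < a3 - 1).
  { destruct (Z.eq_dec Y (a3 - 1)) as [E|E]; [|lia].
    destruct (Hall X ltac:(lia)) as [c1 [c2 [c3 [? [? [? [Hv Hs]]]]]]].
    assert (X <= h * a3) by nia.
    assert (k + 2 <= h) by nia.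
    exfalso; apply Hnot. exists 0, 0, (k+2). repeat split; try lia. }
  split; [lia|]. split; [lia|].
  set (A := fun p => forall x, 0 <= x < a3 -> exists i, 0 <= i <= p /\ ngen a2 a3 (h - k) i x).
  assert (Ak : A k).
  { intros x Hx.
    destruct (Z.eq_dec (x + k * a3) 0) as [E|E].
    - exists 0. split; [lia|]. exists 0, 0. repeat split; nia.
    - destruct (Hall (x + k * a3) ltac:(nia)) as [c1 [c2 [c3 [? [? [? [Hv Hs]]]]]]].
      assert (c3 <= k) by nia.
      exists (k - c3). split; [lia|]. exists c1, c2. repeat split; nia. }
  destruct (min_exists' A k Hk Ak) as [p [Hp [Ap Hmin]]].
  assert (Hbrk : forall i, 0 <= i <= k + 1 -> ~ ngen a2 a3 (h - k - 1) i (Y + 1)).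
  { intros i Hi [c1 [c2 [? [? [Hv Hs]]]]]. apply Hnot.
    exists c1, c2, (k + 1 - i). repeat split; nia. }
  exists p. split; [lia|].
  assert (Hb : is_break a2 a3 (h - k) p (Y + 1)).
  { split; [lia|]. intros i Hi. replace (h - k - 1) with (h - k - 1) by lia.
    apply Hbrk. lia. }
  split; [|split; [exact Hb|]].
  - split; [lia|]. split; [exact Ap|]. split; [|eauto].
    destruct (Z.eq_dec p 0) as [E|E].
    + exists 0. split; [lia|]. intros i Hi. lia.
    + assert (nA : ~ A (p - 1)) by (apply Hmin; lia).
      unfold A in nA. apply not_all_ex_not in nA. destruct nA as [x nx].
      exists x. apply imply_to_and in nx. destruct nx as [Hx nx].
      split; [exact Hx|]. intros i Hi Hg. apply nx. exists i. split; [lia|exact Hg].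
  - destruct (classic (exists j, 0 <= j /\ ngen a2 a3 (h - k - 1) j (Y + 1))) as [[j [Hj Hg]]|Hn].
    + right. destruct (min_exists' (fun j => ngen a2 a3 (h - k - 1) j (Y + 1)) j Hj Hg)
        as [j0 [Hj0 [G0 M0]]].
      exists j0. split.
      * split; [lia|]. split; [exact G0|]. exact M0.
      * destruct (Z_le_gt_dec j0 (k + 1)); [|lia]. exfalso. apply (Hbrk j0); [lia|exact G0].
    + left. exact Hn.
Qed.
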